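(* Let $\rho=|\psi\rangle\langle\psi|$ be an $n$-qubit pure state and $S\subseteq[n]$ non-empty with $s=|S|$. Let $\{|\tilde\phi_j\rangle\langle\tilde\phi_j|\}_{j=1}^4$ be a single-qubit SIC-POVM, and for $\mathbf{q}\in\{1,2,3,4\}^s$ let $|\tilde\Phi_{\mathbf{q}}\rangle\langle\tilde\Phi_{\mathbf{q}}|=\bigotimes_{i\in S}|\tilde\phi_{q_i}\rangle\langle\tilde\phi_{q_i}|$ (identity on qubits outside $S$), so that measuring the local SIC-POVM on the qubits of $S$ yields outcome $\mathbf{q}$ with probability $P(\mathbf{q})=\operatorname{tr}(\rho|\tilde\Phi_{\mathbf{q}}\rangle\langle\tilde\Phi_{\mathbf{q}}|)$. Then $$\mathcal{C}_{|\psi\rangle}(S)=1-3^s\sum_{\mathbf{q}\in\{1,2,3,4\}^s}P(\mathbf{q})^2.$$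
   Context: $[n]=\{1,\dots,n\}$ labels the qubits. For an $n$-qubit pure state $|\psi\rangle$ and a non-empty $S\subseteq[n]$ with $s=|S|$, the concentratable entanglement is $\mathcal{C}_{|\psi\rangle}(S)=1-\frac{1}{2^s}\sum_{\alpha\subseteq S}\operatorname{tr}(\rho_\alpha^2)$, where $\rho_\alpha$ is the reduced state of $|\psi\rangle\langle\psi|$ on the qubits in $\alpha$, and $\operatorname{tr}(\rho_\emptyset^2):=1$. A single-qubit SIC-POVM consists of $|\tilde\phi_j\rangle=\frac{1}{\sqrt2}|\phi_j\rangle$, $j=1,\dots,4$, where $|\phi_j\rangle$ are unit vectors in $\mathbb{C}^2$ with $|\langle\phi_j|\phi_k\rangle|^2=1/3$ for $j\ne k$, so that $\sum_j|\tilde\phi_j\rangle\langle\tilde\phi_j|=\mathbb{I}$; e.g. $|\phi_1\rangle=|0\rangle$, $|\phi_{k}\rangle=\frac{1}{\sqrt3}|0\rangle+\sqrt{\frac23}e^{i2\pi(k-2)/3}|1\rangle$ for $k=2,3,4$. *)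

(* Defs.v *)
(* Complex scalars: an arbitrary numClosedFieldType C
   (e.g. algC, or complex R for a real closed field R). *)
From HB Require Import structures.
From mathcomp Require Import all_boot all_order all_algebra.
Set Implicit Arguments. Unset Strict Implicit. Unset Printing Implicit Defensive.
Import Order.TTheory GRing.Theory Num.Theory.
Local Open Scope ring_scope.

(* Computational basis of n qubits: bit strings x : 'I_n -> bool.
   A state vector psi assigns an amplitude to each basis string. *)
Notation bits n := {ffun 'I_n -> bool}.
Notation bitsIn A := {ffun {i : 'I_ _ | i \in A} -> bool}.
Notation bitsOut A := {ffun {i : 'I_ _ | i \notin A} -> bool}.

Section QDefs.
Variable C : numClosedFieldType.
Variable n : nat.

Definition normalized (psi : bits n -> C) : Prop :=
  \sum_(x : bits n) psi x * (psi x)^* = 1.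

Definition glue (A : {set 'I_n}) (a : bitsIn A) (c : bitsOut A) : bits n :=
  [ffun i => match boolP (i \in A) with
             | AltTrue h => a (exist _ i h)
             | AltFalse h => c (exist _ i h)
             end].

(* reduced state rho_A = tr_{[n]\A} |psi><psi|, matrix entries <a|rho_A|b> *)
Definition reduced (psi : bits n -> C) (A : {set 'I_n}) (a b : bitsIn A) : C :=
  \sum_(c : bitsOut A) psi (glue a c) * (psi (glue b c))^*.

(* purity tr(rho_A^2), with tr(rho_empty^2) := 1 *)
Definition purity (psi : bits n -> C) (A : {set 'I_n}) : C :=
  if A == set0 then 1
  else \sum_(a : bitsIn A) \sum_(b : bitsIn A) reduced psi a b * reduced psi b a.

Definition conc_ent (psi : bits n -> C) (S : {set 'I_n}) : C :=
  1 - ((2 ^+ #|S|)%:R)^-1 * \sum_(A in powerset S) purity psi A.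

(* single-qubit vectors: index false = |0>, true = |1> *)
Definition qinner (u v : bool -> C) : C := \sum_(b : bool) (u b)^* * v b.

Definition is_SIC (phi : 'I_4 -> bool -> C) : Prop :=
  (forall j, qinner (phi j) (phi j) = 1) /\
  (forall j k, j != k ->
     qinner (phi j) (phi k) * (qinner (phi j) (phi k))^* = 3%:R^-1).

Definition tphi (phi : 'I_4 -> bool -> C) (j : 'I_4) (b : bool) : C :=
  phi j b / sqrtC 2%:R.

(* matrix entries <x| (tensor_{i in S} |tphi_{q_i}><tphi_{q_i}|) (x) I |y> *)
Definition sic_op (phi : 'I_4 -> bool -> C) (S : {set 'I_n})
  (q : {ffun {i : 'I_n | i \in S} -> 'I_4}) (x y : bits n) : C :=
  (\prod_(i : {i : 'I_n | i \in S})
      (tphi phi (q i) (x (val i)) * (tphi phi (q i) (y (val i)))^*)) *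
  (\prod_(i : 'I_n | i \notin S) (x i == y i)%:R).

(* P(q) = tr(|psi><psi| Phi_q) = sum_{x,y} <y|rho|x> <x|Phi_q|y> *)
Definition sic_prob (psi : bits n -> C) (phi : 'I_4 -> bool -> C)
  (S : {set 'I_n}) (q : {ffun {i : 'I_n | i \in S} -> 'I_4}) : C :=
  \sum_(x : bits n) \sum_(y : bits n) (psi y * (psi x)^*) * sic_op phi q x y.

End QDefs.

(* Main.v *)
Require Import Defs.
From HB Require Import structures.
From mathcomp Require Import all_boot all_order all_algebra ring.
Set Implicit Arguments. Unset Strict Implicit. Unset Printing Implicit Defensive.
Import Order.TTheory GRing.Theory Num.Theory.
Local Open Scope ring_scope.

Section Sic.
Variable C : numClosedFieldType.
Variable phi : 'I_4 -> bool -> C.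
Hypothesis Hs : is_SIC phi.

Definition fa (i : 'I_4) : bool := (2 <= i)%N.
Definition fb (i : 'I_4) : bool := odd i.

Lemma sum4 (g : bool -> bool -> C) :
  \sum_(i < 4) g (fa i) (fb i) = \sum_(a : bool) \sum_(b : bool) g a b.
Proof. rewrite !big_ord_recl big_ord0 !big_bool /fa /fb /=. ring. Qed.

Definition Nm : 'M[C]_4 := \matrix_(k < 4, i < 4) ((phi k (fa i))^* * phi k (fb i)).
Definition Nh : 'M[C]_4 := \matrix_(i < 4, k < 4) (phi k (fa i) * (phi k (fb i))^*).
Definition Gi : 'M[C]_4 := \matrix_(k < 4, l < 4) (3%:R / 2%:R * (k == l)%:R - 4%:R^-1).
Definition Gm : 'M[C]_4 := \matrix_(k < 4, l < 4) (if k == l then 1 else 3%:R^-1).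

Lemma NNh : Nm *m Nh = Gm.
Proof.
apply/matrixP => k l; rewrite !mxE.
rewrite (eq_bigr (fun i => (fun a b => ((phi k a)^* * phi l a) * (phi k b * (phi l b)^*)) (fa i) (fb i))); last first.
  by move=> i _; rewrite !mxE /=; ring.
rewrite (sum4 (fun a b => ((phi k a)^* * phi l a) * (phi k b * (phi l b)^*))).
have -> : \sum_(a : bool) \sum_(b : bool) ((phi k a)^* * phi l a) * (phi k b * (phi l b)^*)
   = qinner (phi k) (phi l) * (qinner (phi k) (phi l))^*.
  rewrite /qinner !big_bool /= rmorphD !rmorphM /= !conjCK; ring.
case: eqVneq => [->|kl]; first by rewrite (proj1 Hs) conjC1 mulr1.
exact: (proj2 Hs _ _ kl).
Qed.

Lemma GGi : Gm *m Gi = 1%:M.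
Proof.
have h2 : (2%:R : C) != 0 by rewrite pnatr_eq0.
have h3 : (3%:R : C) != 0 by rewrite pnatr_eq0.
have h4 : (4%:R : C) != 0 by rewrite pnatr_eq0.
apply/matrixP => k m; rewrite !mxE !big_ord_recl big_ord0 !mxE.
case: k => [[|[|[|[|k]]]] Hk] //; case: m => [[|[|[|[|m]]]] Hm] //=; 
  rewrite /eq_op /= /bump /=; field; done.
Qed.


Lemma NhGiN : Nh *m Gi *m Nm = 1%:M.
Proof. by apply: mulmx1C; rewrite mulmxA NNh GGi. Qed.

Lemma idx_lt (a b : bool) : ((a : nat).*2 + b < 4)%N.
Proof. by case: a; case: b. Qed.
Definition idx (a b : bool) : 'I_4 := Ordinal (idx_lt a b).
Lemma fa_idx a b : fa (idx a b) = a. Proof. by case: a; case: b. Qed.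
Lemma fb_idx a b : fb (idx a b) = b. Proof. by case: a; case: b. Qed.

Lemma sumGi (g : 'I_4 -> C) k :
  \sum_l g l * Gi l k = 3%:R / 2%:R * g k - 4%:R^-1 * \sum_l g l.
Proof.
rewrite (eq_bigr (fun l => 3%:R/2%:R * (g l * (l == k)%:R) - 4%:R^-1 * g l)); last first.
  by move=> l _; rewrite mxE eq_sym; ring.
rewrite sumrB -!mulr_sumr (bigD1 k) //= eqxx mulr1 big1 ?addr0 //.
by move=> l /negbTE ->; rewrite mulr0.
Qed.

Definition Fs (a b : bool) : C := \sum_l phi l a * (phi l b)^*.

Lemma Eid a b a' b' :
  \sum_k (3%:R / 2%:R * (phi k a * (phi k b)^*) - 4%:R^-1 * Fs a b) *
     ((phi k a')^* * phi k b') = ((a == a') && (b == b'))%:R.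
Proof.
have := NhGiN; move/matrixP/(_ (idx a b) (idx a' b')); rewrite !mxE.
have -> : (idx a b == idx a' b') = ((a == a') && (b == b')).
  by case: a; case: b; case: a'; case: b'.
move=> <-; apply: eq_bigr => k _.
rewrite [(Nh *m Gi) _ _]mxE (sumGi (Nh (idx a b))) !mxE !fa_idx !fb_idx.
by congr ((_ - _ * _) * _); rewrite /Fs; apply: eq_bigr => l _; rewrite mxE fa_idx fb_idx.
Qed.

Lemma Fs_eq a b : Fs a b = 2%:R * (a == b)%:R.
Proof.
have e1 := Eid a b false false; have e2 := Eid a b true true.
have h : \sum_(k < 4) (3%:R / 2%:R * (phi k a * (phi k b)^*) - 4%:R^-1 * Fs a b)
   = ((a == false) && (b == false))%:R + ((a == true) && (b == true))%:R.
  rewrite -e1 -e2 -big_split; apply: eq_bigr => k _; rewrite /= -mulrDr.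
  have := proj1 Hs k; rewrite /qinner big_bool /= => q; rewrite (addrC ((phi k false)^* * _)) q mulr1 //.
rewrite sumrB -mulr_sumr sumr_const card_ord in h.
have -> : Fs a b = 2%:R * (3%:R / 2%:R * Fs a b - 4%:R^-1 * Fs a b *+ 4).
  rewrite -mulr_natr; field; rewrite ?pnatr_eq0 //.
rewrite /Fs in h *; rewrite h; congr (_ * _); by clear e1 e2 h; case: a; case: b; rewrite /= ?addr0 ?add0r.
Qed.

Lemma Tid a b a' b' :
  \sum_k phi k a * (phi k b)^* * ((phi k a')^* * phi k b') =
  2%:R / 3%:R * (((a == a') && (b == b'))%:R + ((a == b) && (a' == b'))%:R).
Proof.
have e := Eid a b a' b'.
rewrite (eq_bigr (fun k => 3%:R / 2%:R * (phi k a * (phi k b)^* * ((phi k a')^* * phi k b'))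
   - 4%:R^-1 * Fs a b * ((phi k a')^* * phi k b'))) in e; last by move=> k _; ring.
rewrite sumrB -!mulr_sumr in e.
have hc : \sum_k (phi k a')^* * phi k b' = 2%:R * (a' == b')%:R.
  transitivity (Fs a' b')^*; last by rewrite Fs_eq rmorphM /= !conjC_nat.
  by rewrite /Fs rmorph_sum; apply: eq_bigr => k _; rewrite rmorphM /= conjCK mulrC.
rewrite hc Fs_eq in e.
move: e; set T := \sum_k _ => e.
have -> : T = 2%:R / 3%:R * (3%:R / 2%:R * T - 4%:R^-1 * (2%:R * (a == b)%:R) * (2%:R * (a' == b')%:R)
   + (a == b)%:R * (a' == b')%:R).
  field; rewrite ?pnatr_eq0 //.
by rewrite e -natrM mulnb.
Qed.


Lemma tphi_pair j u v :
  tphi phi j u * (tphi phi j v)^* = phi j u * (phi j v)^* / 2%:R.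
Proof.
have s2 : sqrtC 2%:R * sqrtC 2%:R = 2%:R :> C by rewrite -expr2 sqrtCK.
rewrite /tphi rmorphM /= fmorphV /= (geC0_conj (x := sqrtC _)) ?sqrtC_ge0 ?ler0n //.
by rewrite mulrACA -invfM s2.
Qed.

Lemma sic_tphi x y x' y' :
  \sum_(j < 4) (tphi phi j x * (tphi phi j y)^* * (tphi phi j x' * (tphi phi j y')^*)) =
  6%:R^-1 * (((x == y') && (y == x'))%:R + ((x == y) && (x' == y'))%:R).
Proof.
rewrite (eq_bigr (fun j => 4%:R^-1 * (phi j x * (phi j y)^* * ((phi j y')^* * phi j x')))); last first.
  move=> j _; rewrite !tphi_pair; field; rewrite ?pnatr_eq0 //.
rewrite -mulr_sumr Tid [y' == x']eq_sym; field; rewrite ?pnatr_eq0 //.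
Qed.

End Sic.

Section Glue.
Variable C : numClosedFieldType.
Variable n : nat.
Implicit Types (A : {set 'I_n}) (x y : bits n).

Lemma glue_in (A : {set 'I_n}) (a : bitsIn A) (c : bitsOut A) i (h : i \in A) :
  glue a c i = a (exist _ i h).
Proof.
rewrite ffunE. destruct (boolP (i \in A)) as [h'|h'].
 - by congr (a _); apply: val_inj.
 - by exfalso; move: h'; rewrite h.
Qed.
Lemma glue_out (A : {set 'I_n}) (a : bitsIn A) (c : bitsOut A) i (h : i \notin A) :
  glue a c i = c (exist _ i h).
Proof.
rewrite ffunE. destruct (boolP (i \in A)) as [h'|h'].
 - by exfalso; move: h; rewrite h'.
 - by congr (c _); apply: val_inj.
Qed.

Definition rin A x : bitsIn A := [ffun i => x (val i)].
Definition rout A x : bitsOut A := [ffun i => x (val i)].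

Lemma rinK A x : glue (rin A x) (rout A x) = x.
Proof.
apply/ffunP => i; case: (boolP (i \in A)) => h.
- by rewrite (glue_in _ _ h) ffunE.
- by rewrite (glue_out _ _ h) ffunE.
Qed.

Lemma glueK A (a : bitsIn A) (c : bitsOut A) :
  (rin A (glue a c), rout A (glue a c)) = (a, c).
Proof.
congr pair; apply/ffunP => -[i hi]; rewrite [LHS]ffunE /=.
- exact: (glue_in a c hi).
- exact: (glue_out a c hi).
Qed.

Lemma sum_glue A (g : bits n -> C) :
  \sum_x g x = \sum_(a : bitsIn A) \sum_(c : bitsOut A) g (glue a c).
Proof.
rewrite pair_big /= (reindex (fun p : bitsIn A * bitsOut A => glue p.1 p.2)) //.
exists (fun x => (rin A x, rout A x)) => [[a c] _ | x _] /=; first by rewrite glueK.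
exact: rinK.
Qed.

Definition mix A x y : bits n := [ffun i => if i \in A then x i else y i].

Lemma mix_glue A (a b : bitsIn A) (c c' : bitsOut A) :
  mix A (glue a c') (glue b c) = glue a c.
Proof.
apply/ffunP => i; rewrite [LHS]ffunE; case: (boolP (i \in A)) => h.
- by rewrite /= !(glue_in _ _ h).
- by rewrite /= !(glue_out _ _ h).
Qed.

Lemma collapse (f : bits n -> C) (z : bits n) :
  \sum_y f y * \prod_i (y i == z i)%:R = f z.
Proof.
rewrite (bigD1 z) //= [X in _ * X]big1 ?mulr1 => [|i _]; last by rewrite eqxx.
rewrite [X in _ + X]big1 ?addr0 // => y yz.
have : ~~ [forall i, y i == z i].
  by apply: contra yz => /forallP H; apply/eqP/ffunP => i; apply/eqP/H.
by case/forallPn => i Hi; rewrite (bigD1 i) //= (negbTE Hi) mul0r mulr0.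
Qed.


Definition Kf A i (u v u' v' : bool) : C :=
  if i \in A then ((u == v') && (v == u'))%:R else ((u == v) && (u' == v'))%:R.

Lemma Kf_mix A x y x' y' i :
  Kf A i (x i) (y i) (x' i) (y' i) =
  (y i == mix A x' x i)%:R * (y' i == mix A x x' i)%:R.
Proof.
rewrite /Kf !ffunE -natrM mulnb; case: (i \in A); congr (_%:R);
by case: (x i); case: (y i); case: (x' i); case: (y' i).
Qed.

Lemma L1 A (psi : bits n -> C) :
  \sum_x \sum_y \sum_(x' : bits n) \sum_(y' : bits n)
     (psi y * (psi x)^*) * (psi y' * (psi x')^*) *
     \prod_i Kf A i (x i) (y i) (x' i) (y' i)
  = \sum_x \sum_(x' : bits n) (psi x)^* * (psi x')^* * (psi (mix A x' x) * psi (mix A x x')).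
Proof.
apply: eq_bigr => x _; rewrite exchange_big /=; apply: eq_bigr => x' _.
transitivity (\sum_y (psi y * \prod_i (y i == mix A x' x i)%:R) *
   ((psi x)^* * (psi x')^* * \sum_(y' : bits n) psi y' * \prod_i (y' i == mix A x x' i)%:R)).
  apply: eq_bigr => y _; rewrite mulrA mulr_sumr; apply: eq_bigr => y' _.
  rewrite (eq_bigr (fun i => (y i == mix A x' x i)%:R * (y' i == mix A x x' i)%:R)).
    by rewrite big_split /=; ring.
  by move=> i _; rewrite Kf_mix.
by rewrite -mulr_suml !collapse; ring.
Qed.

Lemma L2 A (psi : bits n -> C) :
  \sum_(a : bitsIn A) \sum_(b : bitsIn A) reduced psi a b * reduced psi b a
  = \sum_x \sum_(x' : bits n) (psi x)^* * (psi x')^* * (psi (mix A x' x) * psi (mix A x x')).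
Proof.
symmetry; rewrite (sum_glue A); under eq_bigr => b _ do under eq_bigr => c _ do rewrite (sum_glue A).
under eq_bigr => b _ do rewrite exchange_big /=.
rewrite exchange_big /=; apply: eq_bigr => a _; apply: eq_bigr => b _.
rewrite /reduced big_distrl /=; apply: eq_bigr => c _; rewrite big_distrr /=.
apply: eq_bigr => c' _; rewrite !mix_glue; ring.
Qed.


Lemma purityE A (psi : bits n -> C) : normalized psi ->
  purity psi A = \sum_x \sum_(x' : bits n) (psi x)^* * (psi x')^* * (psi (mix A x' x) * psi (mix A x x')).
Proof.
move=> Hn; rewrite /purity; case: eqP => [-> | _]; last exact: L2.
have m0 : forall u v : bits n, mix set0 u v = v.
  by move=> u v; apply/ffunP => i; rewrite ffunE in_set0.
under eq_bigr => x _ do under eq_bigr => x' _ do rewrite !m0.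
transitivity ((\sum_x psi x * (psi x)^*) * (\sum_(x' : bits n) psi x' * (psi x')^*)).
  by rewrite Hn mulr1.
rewrite big_distrl; apply: eq_bigr => x _; rewrite big_distrr; apply: eq_bigr => x' _ /=; ring.
Qed.

End Glue.

Lemma prod_add_sets (C : numClosedFieldType) (I : finType) (S : {set I}) (a b : I -> C) :
  \prod_(i in S) (a i + b i) =
  \sum_(A in powerset S) (\prod_(i in A) a i * \prod_(i in S :\: A) b i).
Proof.
have E : \prod_(i in S) (a i + b i) = \prod_i \sum_(c : bool)
   (if c then (if i \in S then a i else 0) else (if i \in S then b i else 1)).
  rewrite [RHS](bigID (fun i => i \in S)) /=.
  rewrite [X in _ = _ * X]big1; last by move=> i /negbTE ->; rewrite big_bool /= add0r.
  by rewrite mulr1; apply: eq_bigr => i iS; rewrite big_bool /= iS.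
rewrite E bigA_distr_bigA /=.
rewrite (reindex (fun A : {set I} => [ffun i => i \in A])) /=; last first.
  exists (fun f : {ffun I -> bool} => [set i | f i]) => [A _|f _].
    by apply/setP => i; rewrite inE ffunE.
  by apply/ffunP => i; rewrite ffunE inE.
rewrite (bigID (fun A : {set I} => A \subset S)) /=.
rewrite [X in _ + X]big1 ?addr0; last first.
  move=> A nAS; case/subsetPn: nAS => i iA niS.
  by rewrite (bigD1 i) //= ffunE iA (negbTE niS) mul0r.
apply: eq_big => [A|A AS]; first by rewrite powersetE.
rewrite (bigID (fun i => i \in A)) /=; congr (_ * _).
  by apply: eq_bigr => i iA; rewrite ffunE iA (subsetP AS _ iA).
rewrite (bigID (fun i => i \in S)) /=.
rewrite [X in _ * X = _]big1 ?mulr1; last first.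
  by move=> i /andP[nA nS]; rewrite ffunE (negbTE nA) (negbTE nS).
apply: eq_big => [i|i /andP[nA iS]]; first by rewrite !inE andbC.
by rewrite ffunE (negbTE nA) iS.
Qed.

Lemma Kf_prod (C : numClosedFieldType) n (A S : {set 'I_n}) (AS : A \subset S) (x y x' y' : bits n) :
  \prod_i Kf C A i (x i) (y i) (x' i) (y' i) =
  \prod_(i in A) ((x i == y' i) && (y i == x' i))%:R *
  \prod_(i in S :\: A) ((x i == y i) && (x' i == y' i))%:R *
  \prod_(i | i \notin S) ((x i == y i) && (x' i == y' i))%:R.
Proof.
rewrite (bigID (fun i => i \in A)) /= -mulrA; congr (_ * _).
  by apply: eq_bigr => i iA; rewrite /Kf iA.
rewrite (bigID (fun i => i \in S)) /=; congr (_ * _); apply: eq_big => [i|i].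
- by rewrite !inE andbC.
- by move=> /andP[nA _]; rewrite /Kf (negbTE nA).
- case: (boolP (i \in S)) => iS; rewrite ?andbF ?andbT //.
  by apply/negP => iA; rewrite (subsetP AS _ iA) in iS.
- by move=> /andP[nA _]; rewrite /Kf (negbTE nA).
Qed.


Lemma sumq (C : numClosedFieldType) n (S : {set 'I_n}) (phi : 'I_4 -> bool -> C)
  (Hs : is_SIC phi) (x y x' y' : bits n) :
  \sum_(q : {ffun {i : 'I_n | i \in S} -> 'I_4}) sic_op phi q x y * sic_op phi q x' y' =
  6%:R^-1 ^+ #|S| * \sum_(A in powerset S) \prod_i Kf C A i (x i) (y i) (x' i) (y' i).
Proof.
rewrite /sic_op.
under eq_bigr => q _ do rewrite mulrACA -!big_split /=.
rewrite -mulr_suml.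
rewrite -(@bigA_distr_bigA _ _ _ _ _ _ _ (fun (j : {i : 'I_n | i \in S}) (k : 'I_4) =>
   tphi phi k (x (val j)) * (tphi phi k (y (val j)))^* *
   (tphi phi k (x' (val j)) * (tphi phi k (y' (val j)))^*))) /=.
under eq_bigr => j _ do rewrite sic_tphi //.
rewrite -(big_sub S (fun i => 6%:R^-1 * (((x i == y' i) && (y i == x' i))%:R +
                                         ((x i == y i) && (x' i == y' i))%:R))) /=.
rewrite big_split /= prodr_const prod_add_sets -!mulrA; congr (_ * _).
rewrite mulr_suml; apply: eq_big => [A|A]; first by [].
rewrite powersetE => AS; rewrite (Kf_prod C AS); congr (_ * _).
by apply: eq_bigr => i _; rewrite -natrM mulnb.
Qed.

Theorem corollary1 (C : numClosedFieldType) (n : nat)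
  (psi : {ffun 'I_n -> bool} -> C) (S : {set 'I_n})
  (phi : 'I_4 -> bool -> C) :
  normalized psi -> S != set0 -> is_SIC phi ->
  conc_ent psi S =
  1 - (3 ^+ #|S|)%:R *
      \sum_(q : {ffun {i : 'I_n | i \in S} -> 'I_4}) sic_prob psi phi q ^+ 2.
Proof.
move=> Hn _ Hs.
suff -> : \sum_(q : {ffun {i : 'I_n | i \in S} -> 'I_4}) sic_prob psi phi q ^+ 2 =
   6%:R^-1 ^+ #|S| * \sum_(A in powerset S) purity psi A.
  rewrite /conc_ent mulrA; congr (1 - _ * _).
  rewrite !natrX -exprVn -exprMn; congr (_ ^+ _).
  by field; rewrite ?pnatr_eq0.
transitivity (\sum_(x : bits n) \sum_(y : bits n) \sum_(x' : bits n) \sum_(y' : bits n)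
   \sum_(q : {ffun {i : 'I_n | i \in S} -> 'I_4})
     (psi y * (psi x)^*) * (psi y' * (psi x')^*) * (sic_op phi q x y * sic_op phi q x' y')).
  have Pq : forall q : {ffun {i : 'I_n | i \in S} -> 'I_4}, sic_prob psi phi q ^+ 2 = \sum_(x : bits n) \sum_(y : bits n) \sum_(x' : bits n) \sum_(y' : bits n)
     (psi y * (psi x)^*) * (psi y' * (psi x')^*) * (sic_op phi q x y * sic_op phi q x' y').
    move=> q; rewrite expr2 /sic_prob big_distrl; apply: eq_bigr => x _.
    rewrite big_distrl; apply: eq_bigr => y _; rewrite big_distrr; apply: eq_bigr => x' _.
    rewrite big_distrr; apply: eq_bigr => y' _ /=; ring.
  under eq_bigr => q _ do rewrite Pq.
  rewrite exchange_big; apply: eq_bigr => x _; rewrite exchange_big; apply: eq_bigr => y _.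
  rewrite exchange_big; apply: eq_bigr => x' _; rewrite exchange_big; apply: eq_bigr => y' _.
  by [].
transitivity (\sum_(x : bits n) \sum_(y : bits n) \sum_(x' : bits n) \sum_(y' : bits n)
   \sum_(A in powerset S) 6%:R^-1 ^+ #|S| *
     ((psi y * (psi x)^*) * (psi y' * (psi x')^*) * \prod_i Kf C A i (x i) (y i) (x' i) (y' i))).
  apply: eq_bigr => x _; apply: eq_bigr => y _; apply: eq_bigr => x' _; apply: eq_bigr => y' _.
  rewrite -[LHS]mulr_sumr sumq // -[RHS]mulr_sumr mulrCA; congr (_ * _).
  by rewrite mulr_sumr.
have H : forall A : {set 'I_n}, 6%:R^-1 ^+ #|S| * purity psi A =
   \sum_(x : bits n) \sum_(y : bits n) \sum_(x' : bits n) \sum_(y' : bits n)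
     6%:R^-1 ^+ #|S| *
     ((psi y * (psi x)^*) * (psi y' * (psi x')^*) * \prod_i Kf C A i (x i) (y i) (x' i) (y' i)).
  move=> A; rewrite (purityE A Hn) -L1 mulr_sumr; apply: eq_bigr => x _.
  rewrite mulr_sumr; apply: eq_bigr => y _; rewrite mulr_sumr; apply: eq_bigr => x' _.
  by rewrite mulr_sumr.
symmetry; rewrite mulr_sumr; under eq_bigr => A _ do rewrite H.
rewrite exchange_big; apply: eq_bigr => x _; rewrite exchange_big; apply: eq_bigr => y _.
by rewrite exchange_big; apply: eq_bigr => x' _; rewrite exchange_big.
Qed.
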